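(* Let $G$ be the central product of normal subgroups $H,K$ ($G=HK$, $[H,K]=1$) with $H'\cap K'=1$, and let $D$ be a divisible abelian group with trivial action. Then the homomorphism $$\theta'=(\operatorname{res}^G_H,\operatorname{res}^G_K,\nu):\operatorname{H}^2(G,D)\to\operatorname{H}^2(H,D)\oplus\operatorname{H}^2(K,D)\oplus\operatorname{Hom}(H\otimes K,D)$$ is injective.
   Context: $X\otimes Y$ denotes the abelian tensor product $X/X'\otimes_{\mathbb{Z}}Y/Y'$. For $\xi\in\operatorname{H}^2(G,D)$ represented by a 2-cocycle $f$, $\nu(\xi)(hH'\otimes kK')=f(h,k)-f(k,h)$ for $h\in H$, $k\in K$. *)

(* Defs.v *)
(* Groups are possibly infinite: we use the (non-finite)
   [groupType] structure of mathcomp/boot/monoid.v. *)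
From HB Require Import structures.
From mathcomp Require Import all_boot all_order all_algebra.
Set Implicit Arguments. Unset Strict Implicit. Unset Printing Implicit Defensive.
Import GRing.Theory.


Inductive gen_subgroup (G : groupType) (S : G -> Prop) : G -> Prop :=
  | gen_in x : S x -> gen_subgroup S x
  | gen_one : gen_subgroup S (@monoid.one G)
  | gen_mul x y : gen_subgroup S x -> gen_subgroup S y ->
                  gen_subgroup S (monoid.mul x y)
  | gen_inv x : gen_subgroup S x -> gen_subgroup S (monoid.inv x).

Definition derived (G : groupType) (H : {pred G}) : G -> Prop :=
  gen_subgroup (fun z => exists x y, x \in H /\ y \in H /\ z = monoid.commg x y).

Definition is_subgroup (G : groupType) (H : {pred G}) : Prop :=
  [/\ @monoid.one G \in H,
      forall x y, x \in H -> y \in H -> monoid.mul x y \in H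
    & forall x, x \in H -> monoid.inv x \in H].

Definition is_normal (G : groupType) (H : {pred G}) : Prop :=
  is_subgroup H /\ forall x g, x \in H -> monoid.conjg x g \in H.

Definition divisible (D : zmodType) : Prop :=
  forall (x : D) (n : nat), (0 < n)%N -> exists y : D, (y *+ n)%R = x.

Definition cocycle_on (G : groupType) (S : {pred G}) (D : zmodType)
    (f : G -> G -> D) : Prop :=
  forall x y z, x \in S -> y \in S -> z \in S ->
    (f y z - f (monoid.mul x y) z + f x (monoid.mul y z) - f x y = 0)%R.

(* f1 and f2 define the same class in H^2(S, D) (trivial action), i.e. they
   differ on S x S by a 2-coboundary. *)
Definition cohomologous_on (G : groupType) (S : {pred G}) (D : zmodType)
    (f1 f2 : G -> G -> D) : Prop :=
  exists c : G -> D, forall x y, x \in S -> y \in S ->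
    (f1 x y - f2 x y = c y - c (monoid.mul x y) + c x)%R.

(* The value nu(f)(hH' (x) kK') = f(h,k) - f(k,h). *)
Definition nu (G : groupType) (D : zmodType) (f : G -> G -> D) (h k : G) : D :=
  (f h k - f k h)%R.

(* Main.v *)
Require Import Defs.
From HB Require Import structures.
From mathcomp Require Import all_boot all_order all_algebra.
From mathcomp Require Import boolp classical_sets ssrAC.
Import GRing.Theory.
Import monoid.
Set Implicit Arguments. Unset Strict Implicit.
Local Open Scope classical_set_scope.
Local Open Scope group_scope.
Section Grp.
Variable G : groupType.
Variable H : {pred G}.
Hypothesis H1 : (1 : G) \in H.
Hypothesis HM : forall x y, x \in H -> y \in H -> x * y \in H.
Hypothesis HV : forall x, x \in H -> x^-1 \in H.

Lemma conj_in x g : x \in H -> g \in H -> x ^ g \in H.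
Proof. by move=> hx hg; rewrite conjgE; apply: HM; [apply: HV|apply: HM]. Qed.

Lemma derived_sub x : derived H x -> x \in H.
Proof.
elim=> [z [a [b [ha [hb ->]]]]| |u v _ hu _ hv|u _ hu]; auto.
by rewrite commgEl; apply: HM; [apply: HV|apply: conj_in].
Qed.

Lemma derived_conj x g : derived H x -> g \in H -> derived H (x ^ g).
Proof.
move=> dx hg; elim: dx => [z [a [b [ha [hb ->]]]]| |u v _ hu _ hv|u _ hu].
- rewrite conjRg; apply: gen_in; exists (a ^ g), (b ^ g).
  by split; [apply: conj_in|split; [apply: conj_in|]].
- by rewrite conj1g; apply: gen_one.
- by rewrite conjMg; apply: gen_mul.
- by rewrite conjVg; apply: gen_inv.
Qed.

Lemma commg_derived x y : x \in H -> y \in H -> derived H [~ x, y].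
Proof. by move=> hx hy; apply: gen_in; exists x, y. Qed.

Lemma derived_comm x : (forall a b, a \in H -> b \in H -> commute a b) ->
  derived H x -> x = 1.
Proof.
move=> hc; elim=> [z [a [b [ha [hb ->]]]]| |u v _ -> _ ->|u _ ->].
- by apply/eqP/commgP; apply: hc.
- by [].
- by rewrite mulg1.
- by rewrite invg1.
Qed.

Lemma natexp_in x n : x \in H -> x ^+ n \in H.
Proof. by move=> hx; elim: n => [|n IH]; rewrite ?expg0 // expgS; apply: HM. Qed.

End Grp.
Section Zmod.
Variable D : zmodType.
Local Open Scope ring_scope.
Lemma zA (d d' A B A' B' : D) :
  - d' + d = (A' + B) - (B' + A) -> d + A - B = d' + A' - B'.
Proof.
move=> h; have -> : d = d' + (A' + B - (B' + A)) by rewrite -h addrA subrr add0r.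
by rewrite opprD !addrA subrK addrAC addrK.
Qed.
End Zmod.
Section Zmod2.
Variable D : zmodType.
Local Open Scope ring_scope.
Lemma zB (d1 d2 A1 A2 B1 B2 : D) :
  d1 + d2 + (A1 + A2) - (B1 + B2) = d1 + A1 - B1 + (d2 + A2 - B2).
Proof.
by rewrite -(addrA d1 A1) -(addrA d2 A2) [RHS]addrACA [X in _ = _ + X]addrACA -opprD [RHS]addrA.
Qed.
End Zmod2.
Definition good (G : groupType) (D : zmodType) (H : {pred G}) (W : set (G * D)) :=
  [/\ W (1, 0%R), (forall g d1 d2, W (g,d1) -> W (g,d2) -> d1 = d2),
      (forall g1 g2 d1 d2, W (g1,d1) -> W (g2,d2) -> W (g1*g2, (d1+d2)%R)),
      (forall g d, W (g,d) -> W (g^-1, (-d)%R))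
    & (forall g d, W (g,d) -> g \in H)].

Section Step.
Variable G : groupType.
Variable D : zmodType.
Variable H : {pred G}.
Hypothesis H1 : (1 : G) \in H.
Hypothesis HM : forall x y, x \in H -> y \in H -> x * y \in H.
Hypothesis HV : forall x, x \in H -> x^-1 \in H.
Hypothesis divD : divisible D.
Variable W : set (G * D).
Hypothesis gW : good H W.
Hypothesis Wder : forall d, derived H d -> W (d, 0%R).
Variable x : G.
Hypothesis xH : x \in H.

Lemma conjW u d g : W (u, d) -> g \in H -> W (u ^ g, d).
Proof.
case: gW => _ _ Wm _ Wd wu hg.
have -> : u ^ g = u * [~ u, g] by rewrite commgEl mulVKg.
rewrite -[d]GRing.addr0; apply: Wm => //; apply: Wder.
apply: commg_derived => //; exact: Wd wu.
Qed.

Definition pw a b := x ^+ a * (x ^+ b)^-1.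

Lemma pw_mul a b a' b' : pw a b * pw a' b' = pw (a + a') (b + b').
Proof.
rewrite /pw mulgA -(mulgA (x ^+ a)).
have c : commute (x ^+ b)^-1 (x ^+ a').
  by apply: commute_sym; apply: commuteV; apply: commuteX2; apply: commute_refl.
by rewrite c mulgA -expgnDr -mulgA -invgM -expgnDr (addnC b').
Qed.

Lemma pw_inv a b : (pw a b)^-1 = pw b a.
Proof. by rewrite /pw invgM invgK. Qed.

Lemma pw_in a b : pw a b \in H.
Proof. by apply: HM; [|apply: HV]; apply: natexp_in. Qed.

Lemma Wpow u d q : W (u, d) -> W (u ^+ q, (d *+ q)%R).
Proof.
case: gW => W1 _ Wm _ _ wu; elim: q => [|q IH]; first by rewrite expg0 GRing.mulr0n.
by rewrite expgS GRing.mulrS; apply: Wm.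
Qed.

Lemma claim : exists y : D, forall k e, W (x ^+ k, e) -> e = (y *+ k)%R.
Proof.
case: gW => W1 Wf Wm Wv _.
case: (pselect (exists m, (0 < m)%N /\ exists e, W (x ^+ m, e))) => [tors|ntors].
- pose P := fun m => `[< (0 < m)%N /\ exists e, W (x ^+ m, e) >].
  have exP : exists m, P m by case: tors => m hm; exists m; apply/asboolP.
  case: (ex_minnP exP) => m /asboolP [m0 [em hem]] mmin.
  case: (divD em m0) => y hy; exists y => k e hk.
  set q := k %/ m; set r := k %% m.
  have dk : k = (m * q + r)%N by rewrite (divn_eq k m) mulnC.
  have hxk : x ^+ k = (x ^+ m) ^+ q * x ^+ r by rewrite dk expgnDr expgnA.
  have wq := Wpow q hem.
  have wr : W (x ^+ r, (- (em *+ q) + e)%R).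
    have -> : x ^+ r = ((x ^+ m) ^+ q)^-1 * x ^+ k by rewrite hxk mulKg.
    by apply: Wm => //; apply: Wv.
  have r0 : r = 0%N.
    apply/eqP; rewrite eqn0Ngt; apply/negP => rpos.
    have : (m <= r)%N by apply: mmin; apply/asboolP; split => //; exists (- (em *+ q) + e)%R.
    by rewrite leqNgt ltn_pmod.
  move: wr; rewrite r0 expg0 => wr; have := Wf _ _ _ wr W1.
  move/eqP; rewrite GRing.addrC GRing.subr_eq0 => /eqP ->.
  by rewrite dk r0 addn0 -hy GRing.mulrnA.
- exists 0%R => k e hk; rewrite GRing.mul0rn.
  case: k hk => [|k] hk; first by rewrite expg0 in hk; exact: Wf _ _ _ hk W1.
  by exfalso; apply: ntors; exists k.+1; split => //; exists e.
Qed.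

Lemma step : exists W' : set (G * D),
  good H W' /\ W `<=` W' /\ exists e, W' (x, e).
Proof.
case: claim => y hy.
have gW0 := gW; case: gW0 => W1 Wf Wm Wv Wd.
have hpw : forall a b e, W (pw a b, e) -> e = (y *+ a - y *+ b)%R.
  move=> a b e; case: (leqP b a) => ab.
  - rewrite /pw -expgnFr // => /hy ->; by rewrite GRing.mulrnBr.
  - have -> : pw a b = (x ^+ (b - a))^-1.
      by rewrite expgnFr ?(ltnW ab) // invgM invgK.
    move/Wv; rewrite invgK => /hy; rewrite GRing.mulrnBr ?(ltnW ab) //.
    by move/(congr1 (fun z => - z)%R); rewrite GRing.opprK GRing.opprB.
pose W' := fun p : G * D => exists u d a b, W (u, d) /\
   p = (u * pw a b, (d + y *+ a - y *+ b)%R).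
exists W'; split; [split|split].
- exists 1, 0%R, 0%N, 0%N; split => //.
  by rewrite /pw expg0 invg1 !mulg1 GRing.mulr0n !GRing.addr0 GRing.subr0.
- move=> g d1 d2 [u [d [a [b [wu [-> ->]]]]]] [u' [d' [a' [b' [wu' []]]]]] eg ->.
  apply: zA; rewrite -!GRing.mulrnDr; apply: hpw.
  have -> : pw (a' + b) (b' + a) = u'^-1 * u.
    have eu : u = u' * pw a' b' * (pw a b)^-1 by rewrite -eg mulgK.
    by rewrite -pw_mul -(pw_inv a b) eu -(mulgA u') mulKg.
  by apply: Wm => //; apply: Wv.
- move=> g1 g2 e1 e2 [u1 [d1 [a1 [b1 [wu1 [-> ->]]]]]] [u2 [d2 [a2 [b2 [wu2 [-> ->]]]]]].
  exists (u1 * u2 ^ (pw a1 b1)^-1), (d1 + d2)%R, (a1 + a2)%N, (b1 + b2)%N; split.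
    by apply: Wm => //; apply: conjW => //; apply: HV; apply: pw_in.
  congr (_, _).
    rewrite -pw_mul; move: (pw a1 b1) (pw a2 b2) => p1 p2.
    by rewrite conjgE invgK !mulgA mulgVK.
  by rewrite !GRing.mulrnDr zB.
- move=> g e [u [d [a [b [wu [-> ->]]]]]].
  exists ((u^-1) ^ (pw a b)), (- d)%R, b, a; split.
    by apply: conjW => //; [apply: Wv|apply: pw_in].
  congr (_, _).
    rewrite -(pw_inv a b); move: (pw a b) => p.
    by rewrite conjgE invgM mulgA mulgK.
  by rewrite !GRing.opprD !GRing.opprK GRing.addrAC.
- move=> g e [u [d [a [b [wu [-> _]]]]]].
  by apply: HM; [exact: Wd wu|apply: pw_in].
- case=> u d wu; exists u, d, 0%N, 0%N; split => //.
  by rewrite /pw expg0 invg1 !mulg1 GRing.mulr0n GRing.addr0 GRing.subr0.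
- exists (0 + y *+ 1 - y *+ 0)%R, 1, 0%R, 1%N, 0%N; split => //.
  by rewrite /pw expg0 invg1 mulg1 mul1g expg1.
Qed.

End Step.
Lemma negl_eq0 (D : zmodType) (a b : D) : (- a + b = 0)%R -> b = a.
Proof. by move/eqP; rewrite GRing.addrC GRing.subr_eq0 => /eqP. Qed.

Section Ext.
Variable G : groupType.
Variable D : zmodType.
Variable H : {pred G}.
Hypothesis H1 : (1 : G) \in H.
Hypothesis HM : forall x y, x \in H -> y \in H -> x * y \in H.
Hypothesis HV : forall x, x \in H -> x^-1 \in H.
Hypothesis divD : divisible D.
Variable R0 : set (G * D).
Hypothesis gR0 : good H R0.
Hypothesis van : forall d e, derived H d -> R0 (d, e) -> e = 0%R.

Definition gT : set (G * D) :=
  fun p => exists s e d, R0 (s, e) /\ derived H d /\ p = (s * d, e).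

Lemma good_gT : good H gT.
Proof.
case: gR0 => W1 Wf Wm Wv Wd; split.
- by exists 1, 0%R, 1; split => //; split; [apply: gen_one|rewrite mulg1].
- move=> g e1 e2 [s [e [d [hs [hd [-> ->]]]]]] [s' [e' [d' [hs' [hd' [eq ->]]]]]].
  apply: negl_eq0; apply: (van (d := s'^-1 * s)).
    have -> : s'^-1 * s = d' * d^-1.
      have -> : s = s' * d' * d^-1 by rewrite -eq mulgK.
      by rewrite -(mulgA s') mulKg.
    by apply: gen_mul => //; apply: gen_inv.
  by apply: Wm => //; apply: Wv.
- move=> g1 g2 e1 e2 [s [e [d [hs [hd [-> ->]]]]]] [s' [e' [d' [hs' [hd' [-> ->]]]]]].
  exists (s * s'), (e + e')%R, (d ^ s' * d'); split; first by apply: Wm.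
  split; first by apply: gen_mul => //; apply: derived_conj => //; exact: Wd hs'.
  by rewrite conjgE !mulgA mulgK.
- move=> g e1 [s [e [d [hs [hd [-> ->]]]]]].
  exists s^-1, (- e)%R, ((d^-1) ^ (s^-1)); split; first by apply: Wv.
  split; first by apply: derived_conj => //; [apply: gen_inv|apply: HV; exact: Wd hs].
  by rewrite conjgE invgK mulKg invgM.
- move=> g e1 [s [e [d [hs [hd [-> _]]]]]].
  by apply: HM; [exact: Wd hs|apply: derived_sub].
Qed.

Lemma gT_der d : derived H d -> gT (d, 0%R).
Proof. case: gR0 => W1 _ _ _ _ hd; by exists 1, 0%R, d; rewrite mul1g. Qed.

Lemma R0_gT p : R0 p -> gT p.
Proof. case: p => s e hs; exists s, e, 1; rewrite mulg1; split => //; split => //; exact: gen_one. Qed.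

Definition PP (X : set (G * D)) := good H (X `|` gT).

Lemma PP0 : PP set0.
Proof. by rewrite /PP set0U; exact: good_gT. Qed.

Section Chain.
Variable F : set (set (G * D)).
Hypothesis FP : F `<=` PP.
Hypothesis Ftot : total_on F subset.
Let U := \bigcup_(X in F) X.

Lemma pair_lemma p q : (U `|` gT) p -> (U `|` gT) q ->
  exists Y, PP Y /\ (Y `|` gT) `<=` (U `|` gT) /\ (Y `|` gT) p /\ (Y `|` gT) q.
Proof.
have sub : forall Y, F Y -> (Y `|` gT) `<=` (U `|` gT).
  by move=> Y FY z [Yz|gz]; [left; exists Y|right].
have sub0 : (set0 `|` gT) `<=` (U `|` gT) by move=> z [[]|gz]; right.
case=> [[X FX Xp]|gp]; case=> [[Y FY Yq]|gq].
- case: (Ftot FX FY) => [XY|YX].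
  + exists Y; split; first exact: FP.
    by split; [exact: sub|split; left => //; exact: XY].
  + exists X; split; first exact: FP.
    by split; [exact: sub|split; left => //; exact: YX].
- by exists X; split; [exact: FP|split; [exact: sub|split; [left|right]]].
- by exists Y; split; [exact: FP|split; [exact: sub|split; [right|left]]].
- by exists set0; split; [exact: PP0|split; [exact: sub0|split; right]].
Qed.

Lemma chain_PP : PP U.
Proof.
split.
- by right; apply: gT_der; apply: gen_one.
- move=> g d1 d2 h1 h2; have [Y [[_ Yf _ _ _] [_ [p1 p2]]]] := pair_lemma h1 h2.
  exact: Yf p1 p2.
- move=> g1 g2 d1 d2 h1 h2; have [Y [[_ _ Ym _ _] [sY [p1 p2]]]] := pair_lemma h1 h2.
  by apply: sY; apply: Ym.
- move=> g d h1; have [Y [[_ _ _ Yv _] [sY [p1 _]]]] := pair_lemma h1 h1.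
  by apply: sY; apply: Yv.
- move=> g d h1; have [Y [[_ _ _ _ Yd] [sY [p1 _]]]] := pair_lemma h1 h1.
  exact: Yd p1.
Qed.
End Chain.

Lemma ext : exists alpha : G -> D,
  (forall g1 g2, g1 \in H -> g2 \in H -> alpha (g1 * g2) = (alpha g1 + alpha g2)%R) /\
  (forall s e, R0 (s, e) -> alpha s = e).
Proof.
have [A [PA maxA]] := Zorn_bigcup chain_PP.
set W := A `|` gT.
have Wder : forall d, derived H d -> W (d, 0%R) by move=> d hd; right; apply: gT_der.
have full : forall h, h \in H -> exists e, W (h, e).
  move=> h hH; apply: contrapT => nh.
  have [W' [gW' [sub [e we]]]] := step H1 HM HV divD PA Wder hH.
  apply: (maxA W'); last by rewrite /PP setUidl // => z gz; apply: sub; right.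
  split; first by move=> z Az; apply: sub; left.
  by move=> sW; apply: nh; exists e; left; apply: sW.
have [_ Wf Wm _ _] := PA.
pose alpha g := if pselect (exists e, W (g, e)) is left h then proj1_sig (cid h) else 0%R.
have aW : forall g e, W (g, e) -> alpha g = e.
  move=> g e we; rewrite /alpha; case: pselect => [h|[]]; last by exists e.
  by case: (cid h) => /= e' we'; exact: Wf we' we.
exists alpha; split.
- move=> g1 g2 h1 h2; have [e1 w1] := full _ h1; have [e2 w2] := full _ h2.
  by rewrite (aW _ _ w1) (aW _ _ w2); apply: aW; apply: Wm.
- by move=> s e hs; apply: aW; right; apply: R0_gT.
Qed.
End Ext.
Section Zmod3.
Variable D : zmodType.
Local Open Scope ring_scope.
Lemma zsub2 (x y z t : D) : (x - y) - (z - t) = (x - z) - (y - t).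
Proof. by rewrite opprD addrACA -opprD. Qed.
Lemma zC (a A B C P Q R : D) :
  a + A = B + C -> P = Q + C -> R + B = Q -> A = - R - - P + - a.
Proof.
move=> e1 -> e3.
have -> : A = B + C - a by rewrite -e1 addrC addKr.
have -> : B = Q - R by rewrite -e3 addrC addKr.
by rewrite opprK addrA (addrC (- R) Q).
Qed.
End Zmod3.

Section Final.
Variable G : groupType.
Variable D : zmodType.
Variables H K : {pred G}.
Hypothesis HM : forall x y, x \in H -> y \in H -> x * y \in H.
Hypothesis HV : forall x, x \in H -> x^-1 \in H.
Hypothesis KM : forall x y, x \in K -> y \in K -> x * y \in K.
Hypothesis KV : forall x, x \in K -> x^-1 \in K.
Hypothesis hdec : forall g : G, exists h k, [/\ h \in H, k \in K & g = h * k].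
Hypothesis hcomm : forall h k, h \in H -> k \in K -> commute h k.
Variable f : G -> G -> D.
Hypothesis fc : cocycle_on predT f.
Hypothesis fH : forall h h', h \in H -> h' \in H -> f h h' = 0%R.
Hypothesis fK : forall k k', k \in K -> k' \in K -> f k k' = 0%R.
Hypothesis fs : forall h k, h \in H -> k \in K -> f h k = f k h.

Lemma cocyc x y z : (f x y + f (x * y) z = f y z + f x (y * z))%R.
Proof.
have tx : x \in predT by []. have ty : y \in predT by []. have tz : z \in predT by [].
have := fc tx ty tz; move/eqP; rewrite GRing.subr_eq0 => /eqP.
move/(congr1 (fun t => t + f (x * y) z)%R).
by rewrite GRing.addrAC GRing.subrK => <-.
Qed.

Lemma wd h k h' k' : h \in H -> k \in K -> h' \in H -> k' \in K ->
  h * k = h' * k' -> f h k = f h' k'.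
Proof.
move=> hh hk hh' hk' e.
set z := h^-1 * h'.
have zH : z \in H by apply: HM => //; apply: HV.
have ez : z = k * k'^-1.
  rewrite /z; have -> : h' = h * k * k'^-1 by rewrite e mulgK.
  by rewrite -(mulgA h) mulKg.
have zK : z \in K by rewrite ez; apply: KM => //; apply: KV.
have -> : h' = h * z by rewrite /z mulVKg.
have -> : k = z * k' by rewrite ez mulgVK.
have := cocyc h z k'; rewrite (fH hh zH) (fK zK hk') GRing.add0r GRing.add0r => ->.
by [].
Qed.

Lemma final : exists c : G -> D, forall x y,
  f x y = (c y - c (x * y)%g + c x)%R.
Proof.
have [hh hhP] := choice hdec.
have [kk kkP] := choice hhP.
pose c g := (- f (hh g) (kk g))%R.
have cE : forall h k, h \in H -> k \in K -> c (h * k) = (- f h k)%R.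
  move=> h k hH kK; rewrite /c; have [a b e] := kkP (h * k).
  by rewrite (wd a b hH kK) // -e.
exists c => x y.
have [h1x k1x ex] := kkP x; have [h2x k2x ey] := kkP y.
move: (hh x) (kk x) h1x k1x ex (hh y) (kk y) h2x k2x ey => h1 k1 h1H k1K -> h2 k2 h2H k2K ->.
have exy : h1 * k1 * (h2 * k2) = (h1 * h2) * (k1 * k2).
  by rewrite !mulgA -(mulgA h1 k1) -(hcomm h2H k1K) !mulgA.
rewrite exy !cE //; try (by apply: HM); try (by apply: KM).
apply: (zC (a := f h1 k1) (B := f k1 (h2 * k2)) (C := f h1 (k1 * (h2 * k2)))).
- exact: cocyc.
- have := cocyc h1 h2 (k1 * k2); rewrite fH // GRing.add0r => ->.
  have -> : k1 * (h2 * k2) = h2 * (k1 * k2) by rewrite mulgA -(hcomm h2H k1K) -mulgA.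
  by [].
- have e3 := cocyc k1 h2 k2; have e4 := cocyc h2 k1 k2.
  rewrite (fK k1K k2K) GRing.add0r in e4.
  by rewrite -e4 (fs h2H k1K) (hcomm h2H k1K) e3.
Qed.
End Final.
Section Zmod4.
Variable D : zmodType.
Local Open Scope ring_scope.
Lemma zE (p q r u v : D): (p - q + r) - ((p - u) - (q - (v + u)) + (r - v)) = 0.
Proof. rewrite !opprD !opprK !addrA (ACl ((1*4)*(2*6)*(3*9)*(5*8)*(7*10))) /=.
by rewrite !subrr ?addNr ?add0r. Qed.
Lemma zEK (p q r u v : D): (p - q + r) - ((p + u) - (q + (v + u)) + (r + v)) = 0.
Proof. rewrite !opprD !opprK !addrA (ACl ((1*4)*(2*6)*(3*9)*(5*8)*(7*10))) /=.
by rewrite !subrr ?addNr ?add0r. Qed.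
Lemma zab (a b s : D) : a - s = b + ((a - b) - s).
Proof. by rewrite !addrA (addrC b) addrK. Qed.
Lemma zfin (F ey exy ex cy cxy cx : D) : F - (ey - exy + ex) = cy - cxy + cx -> F = (cy + ey) - (cxy + exy) + (cx + ex).
Proof. move=> h. have -> : F = (cy - cxy + cx) + (ey - exy + ex) by rewrite -h subrK.
 by rewrite ?opprD ?opprK !addrA [LHS](ACl (1*4*2*5*3*6)). Qed.
Lemma zcoc (A A' B B' C C' E E' : D): A - B + C - E = 0 -> A' - B' + C' - E' = 0 -> (A - A') - (B - B') + (C - C') - (E - E') = 0.
Proof. move=> h1 h2. have -> : (A - A') - (B - B') + (C - C') - (E - E') = (A - B + C - E) - (A' - B' + C' - E').
  by rewrite !opprD !opprK !addrA [LHS](ACl (1*3*5*7*2*4*6*8)).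
by rewrite h1 h2 subrr. Qed.
Lemma zN (A B C E : D) : A - B = C - E -> A - C = B - E.
Proof. move=> h. have -> : A = C - E + B by rewrite -h subrK.
by rewrite [LHS](ACl ((1*4)*3*2)) /= subrr add0r addrC. Qed.
Lemma zcob (u v w p q r : D) :
  (u - v + w) - (u - p + q) + (v - p + r) - (w - q + r) = 0.
Proof.
rewrite !opprD !opprK !addrA.
rewrite (ACl ((1*4)*(2*7)*(3*10)*(5*8)*(6*11)*(9*12))) /=.
by rewrite !subrr ?addNr ?add0r.
Qed.
Lemma zsym (F1 F2 E ek eh : D) : F1 = F2 -> F1 - (ek - E + eh) = F2 - (eh - E + ek).
Proof. by move=> ->; rewrite (addrAC ek) (addrAC eh) (addrC ek). Qed.
Lemma zD (p1 p12 p0 q1 q12 q0 : D) :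
  p1 - p12 + p0 = q1 - q12 + q0 -> p12 - q12 = (p0 - q0) + (p1 - q1).
Proof.
move=> h; have -> : p12 = p1 + p0 - (q1 - q12 + q0).
  by rewrite -h !opprD !opprK !addrA (ACl ((1*3)*(2*5)*4)) /= !subrr !add0r.
by rewrite ?opprD ?opprK !addrA [LHS](ACl (2*5*1*3*(4*6))) /= subrr addr0.
Qed.
End Zmod4.
Lemma hom1V (G : groupType) (D : zmodType) (S : {pred G}) (chi : G -> D) :
  1 \in S -> (forall x, x \in S -> x^-1 \in S) ->
  (forall x y, x \in S -> y \in S -> chi (x * y) = (chi x + chi y)%R) ->
  chi 1 = 0%R /\ forall x, x \in S -> chi x^-1 = (- chi x)%R.
Proof.
move=> S1 SV chiM.
have c1 : chi 1 = 0%R.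
  have := chiM 1 1 S1 S1; rewrite mulg1 => /(congr1 (fun t => (t - chi 1%g)%R)).
  by rewrite GRing.subrr GRing.addrK => ->.
split => // x xS; have := chiM x x^-1 xS (SV x xS); rewrite mulgV c1.
by move/eqP; rewrite eq_sym GRing.addr_eq0 => /eqP ->; rewrite GRing.opprK.
Qed.

Lemma good1 (G : groupType) (D : zmodType) (S : {pred G}) (W : set (G * D)) e :
  good S W -> W (1, e) -> e = 0%R.
Proof. by case=> W1 Wf _ _ _ we; exact: Wf we W1. Qed.

Theorem corollary3p4 (G : groupType) (H K : {pred G}) (D : zmodType) :
  is_normal H -> is_normal K ->
  (forall g : G, exists h k, [/\ h \in H, k \in K & g = monoid.mul h k]) ->
  (forall h k, h \in H -> k \in K -> monoid.commute h k) ->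
  (forall x : G, derived H x -> derived K x -> x = @monoid.one G) ->
  divisible D ->
  forall f1 f2 : G -> G -> D,
    cocycle_on predT f1 -> cocycle_on predT f2 ->
    cohomologous_on H f1 f2 ->
    cohomologous_on K f1 f2 ->
    (forall h k, h \in H -> k \in K -> nu f1 h k = nu f2 h k) ->
    cohomologous_on predT f1 f2.
Proof.
move=> [[H1 HM HV] _] [[K1 KM KV] _] hdec hcomm hder divD f1 f2 c1 c2 [a ha] [b hb] hnu.
pose f x y := (f1 x y - f2 x y)%R.
have fc : cocycle_on predT f.
  by move=> x y z hx hy hz; rewrite /f zcoc //; [exact: c1 hx hy hz | exact: c2 hx hy hz].
pose Z : {pred G} := [pred g | (g \in H) && (g \in K)].
have ZP : forall g, g \in Z -> g \in H /\ g \in K by move=> g; rewrite inE => /andP.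
have PZ : forall g, g \in H -> g \in K -> g \in Z by move=> g gh gk; rewrite inE gh gk.
have Z1 : 1 \in Z by apply: PZ.
have ZM : forall x y, x \in Z -> y \in Z -> x * y \in Z.
  by move=> x y /ZP [xh xk] /ZP [yh yk]; apply: PZ; [apply: HM|apply: KM].
have ZV : forall x, x \in Z -> x^-1 \in Z.
  by move=> x /ZP [xh xk]; apply: PZ; [apply: HV|apply: KV].
have Zc : forall z z', z \in Z -> z' \in Z -> commute z z'.
  by move=> z z' /ZP [zh _] /ZP [_ z'k]; apply: hcomm.
pose phi g := (a g - b g)%R.
have phiM : forall z z', z \in Z -> z' \in Z -> phi (z * z') = (phi z + phi z')%R.
  move=> z z' /ZP [zh zk] /ZP [z'h z'k]; apply: zD.
  by rewrite -(ha _ _ zh z'h) -(hb _ _ zk z'k).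
have [phi1 phiV] := hom1V Z1 ZV phiM.
pose RZ : set (G * D) := fun p => exists p1 q, [/\ p1 \in Z, derived H p1, q \in Z,
   derived K q & p = (p1 * q, phi q)].
have gRZ : good Z RZ.
  split.
  - by exists 1, 1; split => //; [apply: gen_one|apply: gen_one|rewrite mulg1 phi1].
  - move=> g e1 e2 [p1 [q [p1Z p1d qZ qd [-> ->]]]] [p1' [q' [p1Z' p1d' qZ' qd' [eq ->]]]].
    suff -> : q = q' by [].
    have ed : p1'^-1 * p1 = q' * q^-1.
      have -> : p1 = p1' * q' * q^-1 by rewrite -eq mulgK.
      by rewrite -(mulgA p1') mulKg.
    apply/esym/divg1_eq; rewrite -ed; apply: hder; last rewrite ed.
      by apply: gen_mul => //; apply: gen_inv.
    by apply: gen_mul => //; apply: gen_inv.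
  - move=> g1 g2 e1 e2 [p1 [q [p1Z p1d qZ qd [-> ->]]]] [p1' [q' [p1Z' p1d' qZ' qd' [-> ->]]]].
    exists (p1 * p1'), (q * q'); split; try by apply: ZM.
    + by apply: gen_mul.
    + by apply: gen_mul.
    + congr (_, _); last by rewrite phiM.
      by rewrite !mulgA -(mulgA p1) (Zc _ _ qZ p1Z') mulgA.
  - move=> g e [p1 [q [p1Z p1d qZ qd [-> ->]]]].
    exists p1^-1, q^-1; split; try by apply: ZV.
    + by apply: gen_inv.
    + by apply: gen_inv.
    + by rewrite invgM (Zc _ _ (ZV _ qZ) (ZV _ p1Z)) phiV.
  - by move=> g e [p1 [q [p1Z _ qZ _ [-> _]]]]; apply: ZM.
have vanZ : forall d e, derived Z d -> RZ (d, e) -> e = 0%R.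
  move=> d e dd; rewrite (derived_comm Zc dd); exact: good1 gRZ.
have [psi [psiM psiR]] := ext Z1 ZM ZV divD gRZ vanZ.
have [psi1 psiV] := hom1V Z1 ZV psiM.
have psiB : forall q, q \in Z -> derived K q -> psi q = phi q.
  move=> q qZ qd; rewrite -[q]mul1g; apply: psiR; exists 1, q; rewrite mul1g.
  by split => //; apply: gen_one.
have psiA : forall p, p \in Z -> derived H p -> psi p = 0%R.
  move=> p pZ pd; rewrite -[p]mulg1 -phi1; apply: psiR; exists p, 1.
  by split => //; apply: gen_one.
pose RH : set (G * D) := fun p => p.1 \in Z /\ p.2 = psi p.1.
have gRH : good H RH.
  split.
  - by split => //; rewrite psi1.
  - by move=> g d1 d2 [_ /= ->] [_ /= ->].
  - by move=> g1 g2 d1 d2 [/= z1 ->] [/= z2 ->]; split; [apply: ZM|rewrite /= psiM].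
  - by move=> g d [/= z ->]; split; [apply: ZV|rewrite /= psiV].
  - by move=> g d [/= /ZP [] ].
have vanH : forall d e, derived H d -> RH (d, e) -> e = 0%R.
  by move=> d e dd [/= dZ ->]; apply: psiA.
have [al [alM alR]] := ext H1 HM HV divD gRH vanH.
pose RK : set (G * D) := fun p => p.1 \in Z /\ p.2 = (phi p.1 - psi p.1)%R.
have gRK : good K RK.
  split.
  - by split => //; rewrite /= psi1 phi1 GRing.subr0.
  - by move=> g d1 d2 [_ /= ->] [_ /= ->].
  - move=> g1 g2 d1 d2 [/= z1 ->] [/= z2 ->]; split; first by apply: ZM.
    by rewrite /= psiM // phiM // GRing.opprD GRing.addrACA.
  - move=> g d [/= z ->]; split; first by apply: ZV.
    by rewrite /= psiV // phiV // GRing.opprK GRing.opprB GRing.addrC.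
  - by move=> g d [/= /ZP [] ].
have vanK : forall d e, derived K d -> RK (d, e) -> e = 0%R.
  by move=> d e dd [/= dZ ->]; rewrite psiB // GRing.subrr.
have [be [beM beR]] := ext K1 KM KV divD gRK vanK.
pose a' g := (a g - al g)%R.
pose b' g := (b g + be g)%R.
have ab : forall z, z \in Z -> a' z = b' z.
  move=> z zZ; rewrite /a' /b' (alR z (psi z)) ?(beR z (phi z - psi z)%R) //.
  exact: zab.
pose e g := if g \in H then a' g else b' g.
have eH : forall h, h \in H -> e h = a' h by move=> h hh; rewrite /e hh.
have eK : forall k, k \in K -> e k = b' k.
  move=> k kk; rewrite /e; case: ifP => // kh; apply: ab; exact: PZ.
pose fp x y := (f x y - (e y - e (x * y)%g + e x))%R.
have fc' : cocycle_on predT fp.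
  move=> x y z hx hy hz; rewrite /fp zcoc //; first exact: fc hx hy hz.
  by rewrite !mulgA zcob.
have fH' : forall h h', h \in H -> h' \in H -> fp h h' = 0%R.
  move=> h h' hh hh'; rewrite /fp /f (ha _ _ hh hh') !eH //; last exact: HM.
  by rewrite /a' (alM _ _ hh hh') zE.
have fK' : forall k k', k \in K -> k' \in K -> fp k k' = 0%R.
  move=> k k' kk kk'; rewrite /fp /f (hb _ _ kk kk') !eK //; last exact: KM.
  by rewrite /b' (beM _ _ kk kk') zEK.
have fs' : forall h k, h \in H -> k \in K -> fp h k = fp k h.
  move=> h k hh kk; rewrite /fp (hcomm h k hh kk); apply: zsym.
  by rewrite /f; apply: zN; exact: hnu h k hh kk.
have [c cP] := final HM HV KM KV hdec hcomm fc' fH' fK' fs'.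
exists (fun g => c g + e g)%R => x y _ _.
by apply: zfin; rewrite -cP.
Qed.
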